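(* Let $n\ge 1$. Write vectors of $\mathbb{R}^n$ as $x=(x_0,\dots,x_{n-1})$. Let $B:\mathbb{R}^n\times\mathbb{R}^n\to\mathbb{R}^{2n}$ be the symmetric bilinear map whose first component is $0$ and whose $(k+2)$-th component, for $k=0,1,\dots,2n-2$, is $\sum_{i+j=k} x_iy_j$ (sum over $0\le i,j\le n-1$). Let $C:\mathbb{R}^n\times\mathbb{R}^n\times\mathbb{R}^n\to\mathbb{R}^{2n}$ be the symmetric trilinear map $$C(x,y,z) = (x_0y_0z_0,\ x_1y_1z_1,\ \dots,\ x_{n-1}y_{n-1}z_{n-1},\ 0,\dots,0).$$ Define $f:\mathbb{R}^n\to\mathbb{R}^n\times\mathbb{R}^{2n}=\mathbb{R}^{3n}$ by $f(x) = \left(x,\ \tfrac12 B(x,x)+\tfrac16 C(x,x,x)\right)$. Then $f$ satisfies the local condition at $x=0$: every solution $(v_1,v_2,v_3,\lambda)\in\mathbb{R}^n\times\mathbb{R}^n\times\mathbb{R}^n\times\mathbb{R}$ of $Df_0(v_1)+D^2f_0(v_2,v_3)+\lambda D^3f_0(v_3,v_3,v_3)=0$ with $v_3\neq 0$ has $v_1=0$, $v_2=0$, $\lambda=0$.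
   Context: For a smooth $f:\mathbb{R}^n\to\mathbb{R}^N$ and $a\in\mathbb{R}^n$, $D^kf_a$ denotes the symmetric $k$-linear map $(\mathbb{R}^n)^k\to\mathbb{R}^N$ of $k$-th order partial derivatives, defined on the standard basis by $D^kf_a(e_{i_1},\dots,e_{i_k}) = \frac{\partial^k f}{\partial x_{i_1}\cdots\partial x_{i_k}}(a)$; $D^1f_a=Df_a$. *)

(* Defs.v *)
From HB Require Import structures.
From mathcomp Require Import all_boot all_order all_algebra.
From mathcomp Require Import all_classical all_reals all_analysis.
Set Implicit Arguments. Unset Strict Implicit. Unset Printing Implicit Defensive.
Import Order.TTheory GRing.Theory Num.Theory.
Import numFieldNormedType.Exports.
Local Open Scope ring_scope.

Section Defs.
Variable R : realType.

Definition std_basis (n : nat) (i : 'I_n) : 'rV[R]_n := delta_mx 0 i.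

Definition partial_deriv (n m : nat) (f : 'rV[R]_n -> 'rV[R]_m) (i : 'I_n)
  : 'rV[R]_n -> 'rV[R]_m :=
  fun x => derive f x (std_basis i).

(* iterated partial_deriv derivative d^k f / (d x_{i_1} ... d x_{i_k}),
   for s = [:: i_1; ...; i_k]  (x_{i_k} is differentiated first) *)
Definition iter_partial_deriv (n m : nat) (f : 'rV[R]_n -> 'rV[R]_m) (s : seq 'I_n)
  : 'rV[R]_n -> 'rV[R]_m :=
  foldr (fun i g => partial_deriv g i) f s.

(* D^k f_a (v_1, ..., v_k), k = size vs, vs = [:: v_1; ...; v_k]: the k-linear
   map whose value on basis vectors (e_{i_1},...,e_{i_k}) is the k-th order
   partial_deriv derivative, extended multilinearly. *)
Definition Dkf (n m : nat) (f : 'rV[R]_n -> 'rV[R]_m) (a : 'rV[R]_n)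
  (vs : seq 'rV[R]_n) : 'rV[R]_m :=
  \sum_(t : (size vs).-tuple 'I_n)
     (\prod_(j < size vs) (nth 0 vs j) 0 (tnth t j)) *: iter_partial_deriv f t a.

(* B : R^n x R^n -> R^{2n}: component 0 (the "first" component) is 0, and
   component k+1 (the "(k+2)-th" component), k = 0..2n-2, is
   sum_{i+j=k} x_i y_j. *)
Definition thm_B (n : nat) (x y : 'rV[R]_n) : 'rV[R]_(n + n) :=
  \row_(m < n + n)
    (if val m == 0%N then 0
     else \sum_(i < n) \sum_(j < n | (val i + val j)%N == (val m).-1) x 0 i * y 0 j).

Definition thm_C (n : nat) (x y z : 'rV[R]_n) : 'rV[R]_(n + n) :=
  row_mx (\row_(i < n) (x 0 i * y 0 i * z 0 i)) 0.

Definition thm_f (n : nat) (x : 'rV[R]_n) : 'rV[R]_(n + (n + n)) :=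
  row_mx x (2^-1 *: thm_B x x + 6^-1 *: thm_C x x x).

End Defs.

(* Main.v *)
Require Import Defs.
From HB Require Import structures.
From mathcomp Require Import all_boot all_order all_algebra.
From mathcomp Require Import all_classical all_reals all_analysis.
From mathcomp Require Import ring zify.
Import Order.TTheory GRing.Theory Num.Theory.
Import numFieldNormedType.Exports.
Local Open Scope classical_set_scope.
Local Open Scope ring_scope.

Lemma derive_cubic (R : realType) (V W : normedModType R) (f : V -> W) x v (a b c : W) :
  (forall h : R, f (h *: v + x) = f x + h *: a + (h ^+ 2) *: b + (h ^+ 3) *: c) ->
  derive f x v = a.
Proof.
move=> H; rewrite /derive; apply: cvg_lim => //.
apply: (@cvg_trans _ ((fun h : R => a + h *: b + (h ^+ 2) *: c) @ 0^')).
  apply: near_eq_cvg.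
  near=> h; rewrite /= H.
  have hn : h != 0 by near: h; exact: nbhs_dnbhs_neq.
  have -> : f x + h *: a + h ^+ 2 *: b + h ^+ 3 *: c - f x = h *: (a + h *: b + h ^+ 2 *: c).
    by rewrite !scalerDr !scalerA -expr2 -exprS addrC !addrA addNr add0r.
  by rewrite scalerA mulVf // scale1r.
suff : (fun h : R => a + h *: b + (h ^+ 2) *: c) @ 0^' --> a + 0 *: b + (0 ^+ 2) *: c.
  by rewrite scale0r expr2 mul0r scale0r !addr0.
apply: cvgD; first apply: cvgD; first exact: cvg_cst.
  apply: cvgZ; last exact: cvg_cst.
  exact: cvg_within.
apply: cvgZ; last exact: cvg_cst.
rewrite expr2; under eq_fun do rewrite expr2.
apply: cvgM; exact: cvg_within.
Unshelve. all: by end_near.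
Qed.

Section Poly.
Variable R : realType.

Definition polyf (n M : nat) (c0 : 'I_M -> R) (c1 : 'I_M -> 'I_n -> R)
  (c2 : 'I_M -> 'I_n -> 'I_n -> R) (c3 : 'I_M -> 'I_n -> 'I_n -> 'I_n -> R)
  (x : 'rV[R]_n) : 'rV[R]_M :=
  \row_m (c0 m + \sum_i c1 m i * x 0 i + \sum_i \sum_j c2 m i j * (x 0 i * x 0 j)
     + \sum_i \sum_j \sum_k c3 m i j k * (x 0 i * x 0 j * x 0 k)).

Lemma sumd (n : nat) (l : 'I_n) (F : 'I_n -> R) :
  \sum_i F i * (i == l)%:R = F l.
Proof.
rewrite (bigD1 l) //= eqxx mulr1 big1 ?addr0 // => i /negbTE ->.
by rewrite mulr0.
Qed.

Lemma sumd' (n : nat) (l : 'I_n) (F : 'I_n -> R) :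
  \sum_i (i == l)%:R * F i = F l.
Proof. by under eq_bigr do rewrite mulrC; exact: sumd. Qed.

Lemma partial_polyf n M c0 c1 c2 c3 (l : 'I_n) :
  partial_deriv (@polyf n M c0 c1 c2 c3) l =
  @polyf n M (fun m => c1 m l) (fun m i => c2 m l i + c2 m i l)
    (fun m i j => c3 m l i j + c3 m i l j + c3 m i j l) (fun _ _ _ _ => 0).
Proof.
apply: funext => x; rewrite /partial_deriv.
pose d (i : 'I_n) : R := (i == l)%:R.
pose y (i : 'I_n) : R := x 0 i.
pose Am m := \sum_i c1 m i * d i + \sum_i \sum_j c2 m i j * (d i * y j + y i * d j)
   + \sum_i \sum_j \sum_k c3 m i j k * (d i * y j * y k + y i * d j * y k + y i * y j * d k).
pose Bm m := \sum_i \sum_j c2 m i j * (d i * d j)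
   + \sum_i \sum_j \sum_k c3 m i j k * (d i * d j * y k + d i * y j * d k + y i * d j * d k).
pose Cm m := \sum_i \sum_j \sum_k c3 m i j k * (d i * d j * d k).
transitivity (\row_m Am m : 'rV[R]_M).
  apply: (@derive_cubic R _ _ _ _ _ _ (\row_m Bm m) (\row_m Cm m)) => h.
  apply/rowP => m; rewrite !mxE.
  have E : forall i : 'I_n, (h *: @std_basis R n l + x) 0 i = h * d i + y i.
    by move=> i; rewrite /std_basis !mxE eqxx.
  have E1 : \sum_i c1 m i * (h *: @std_basis R n l + x) 0 i = \sum_i c1 m i * y i + h * \sum_i c1 m i * d i.
    by rewrite mulr_sumr -big_split; apply: eq_bigr => i _ /=; rewrite E; ring.
  have E2 : \sum_i \sum_j c2 m i j * ((h *: @std_basis R n l + x) 0 i * (h *: @std_basis R n l + x) 0 j) =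
     \sum_i \sum_j c2 m i j * (y i * y j) + h * \sum_i \sum_j c2 m i j * (d i * y j + y i * d j)
     + h ^+ 2 * \sum_i \sum_j c2 m i j * (d i * d j).
    rewrite !mulr_sumr -!big_split; apply: eq_bigr => i _ /=.
    rewrite !mulr_sumr -!big_split; apply: eq_bigr => j _ /=; rewrite !E; ring.
  have E3 : \sum_i \sum_j \sum_k c3 m i j k * ((h *: @std_basis R n l + x) 0 i * (h *: @std_basis R n l + x) 0 j * (h *: @std_basis R n l + x) 0 k) =
     \sum_i \sum_j \sum_k c3 m i j k * (y i * y j * y k)
     + h * \sum_i \sum_j \sum_k c3 m i j k * (d i * y j * y k + y i * d j * y k + y i * y j * d k)
     + h ^+ 2 * \sum_i \sum_j \sum_k c3 m i j k * (d i * d j * y k + d i * y j * d k + y i * d j * d k)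
     + h ^+ 3 * \sum_i \sum_j \sum_k c3 m i j k * (d i * d j * d k).
    rewrite !mulr_sumr -!big_split; apply: eq_bigr => i _ /=.
    rewrite !mulr_sumr -!big_split; apply: eq_bigr => j _ /=.
    rewrite !mulr_sumr -!big_split; apply: eq_bigr => k _ /=; rewrite !E; ring.
  rewrite E1 E2 E3 /Am /Bm /Cm /y; ring.
apply/rowP => m; rewrite !mxE /Am /d /y.
have Z : \sum_i \sum_j \sum_k (0:R) * (x 0 i * x 0 j * x 0 k) = 0.
  by rewrite big1 // => i _; rewrite big1 // => j _; rewrite big1 // => k _; rewrite mul0r.
rewrite Z addr0 sumd.
congr (_ + _ + _).
  transitivity (\sum_i (i == l)%:R * (\sum_j c2 m i j * x 0 j) + \sum_i x 0 i * (\sum_j c2 m i j * (j == l)%:R)).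
    rewrite -big_split; apply: eq_bigr => i _ /=; rewrite !mulr_sumr -big_split.
    by apply: eq_bigr => j _ /=; ring.
  rewrite sumd'; under [X in _ + X = _]eq_bigr => i _ do rewrite sumd.
  by rewrite -big_split; apply: eq_bigr => i _ /=; ring.
transitivity (\sum_i (i == l)%:R * (\sum_j \sum_k c3 m i j k * (x 0 j * x 0 k))
  + \sum_i x 0 i * (\sum_j (j == l)%:R * (\sum_k c3 m i j k * x 0 k))
  + \sum_i x 0 i * (\sum_j x 0 j * (\sum_k c3 m i j k * (k == l)%:R))).
  rewrite -!big_split; apply: eq_bigr => i _ /=; rewrite !mulr_sumr -!big_split.
  apply: eq_bigr => j _ /=; rewrite !mulr_sumr -!big_split.
  by apply: eq_bigr => k _ /=; ring.
rewrite sumd'; under [X in _ + X + _ = _]eq_bigr => i _ do rewrite sumd'.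
under [X in _ + X = _]eq_bigr => i _ do under eq_bigr => j _ do rewrite sumd.
rewrite -!big_split; apply: eq_bigr => i _ /=; rewrite !mulr_sumr -!big_split.
by apply: eq_bigr => j _ /=; ring.
Qed.


Lemma polyf0 n M c0 c1 c2 c3 : @polyf n M c0 c1 c2 c3 0 = \row_m c0 m.
Proof.
apply/rowP => m; rewrite !mxE.
rewrite big1 => [|i _]; last by rewrite mxE mulr0.
rewrite big1 => [|i _]; last by rewrite big1 // => j _; rewrite !mxE mul0r mulr0.
rewrite big1 => [|i _]; last by rewrite big1 // => j _; rewrite big1 // => k _; rewrite !mxE !mul0r mulr0.
by rewrite !addr0.
Qed.

End Poly.

Lemma sum_tupleS (V : nmodType) (I : finType) k (F : k.+1.-tuple I -> V) :
  \sum_(t : k.+1.-tuple I) F t = \sum_(i : I) \sum_(t : k.-tuple I) F [tuple of i :: t].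
Proof.
rewrite pair_big /=.
rewrite (reindex (fun p : I * k.-tuple I => [tuple of p.1 :: p.2])) //=.
apply: onW_bij; exists (fun t : k.+1.-tuple I => (thead t, behead_tuple t)).
  by case=> i t /=; rewrite theadE; congr pair; apply: val_inj.
by move=> t; apply: val_inj; case: t => [[|x s] Hs].
Qed.

Lemma sum_tuple0 (V : nmodType) (I : finType) (F : 0.-tuple I -> V) :
  \sum_(t : 0.-tuple I) F t = F [tuple].
Proof. by rewrite (big_pred1 [tuple]) // => t; rewrite [t]tuple0 /= eqxx. Qed.


Section Main.
Variable R : realType.
Variable n : nat.

Definition C1f (m : 'I_(n + (n + n))) (i : 'I_n) : R :=
  match fintype.split m with inl i' => (i == i')%:R | inr _ => 0 end.
Definition C2f (m : 'I_(n + (n + n))) (i j : 'I_n) : R :=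
  match fintype.split m with inl _ => 0
  | inr p => if val p == 0%N then 0 else 2^-1 * ((val i + val j == (val p).-1)%N%:R) end.
Definition C3f (m : 'I_(n + (n + n))) (i j k : 'I_n) : R :=
  match fintype.split m with inl _ => 0
  | inr p => match fintype.split p with
             | inl q => 6^-1 * (((i == q) && (j == q) && (k == q))%:R)
             | inr _ => 0 end end.

Lemma sum_only (q : 'I_n) (F : 'I_n -> R) : (forall i, i != q -> F i = 0) ->
  \sum_i F i = F q.
Proof. by move=> H; rewrite (bigD1 q) //= big1 ?addr0. Qed.

Lemma thm_f_poly : @thm_f R n = @polyf R n _ (fun _ => 0) C1f C2f C3f.
Proof.
apply: funext => x; apply/rowP => m; rewrite [RHS]mxE /C1f /C2f /C3f.
case: split_ordP => [i' -> | p ->].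
  rewrite row_mxEl sumd' add0r.
  rewrite big1 => [|i _]; last by rewrite big1 // => j _; rewrite mul0r.
  rewrite big1 => [|i _]; last by rewrite big1 // => j _; rewrite big1 // => k _; rewrite mul0r.
  by rewrite !addr0.
rewrite /thm_f row_mxEr [LHS]mxE !mxE /thm_B /thm_C.
have -> : \sum_(i < n) (0:R) * x 0 i = 0 by rewrite big1 // => i _; rewrite mul0r.
rewrite !add0r; congr (_ + _).
  case: eqP => hp.
    by rewrite mulr0; symmetry; rewrite big1 // => i _; rewrite big1 // => j _; rewrite mul0r.
  rewrite mulr_sumr; apply: eq_bigr => i _; rewrite big_mkcond mulr_sumr.
  by apply: eq_bigr => j _ /=; case: eqP => _; rewrite ?mulr1 ?mulr0 ?mul0r //; ring.
case: split_ordP => [q _ | r _].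
  rewrite mxE.
  rewrite (sum_only q) => [|i Hi]; last first.
    by rewrite big1 // => j _; rewrite big1 // => k _; rewrite (negbTE Hi) /= mulr0 mul0r.
  rewrite (sum_only q) => [|j Hj]; last first.
    by rewrite big1 // => k _; rewrite (negbTE Hj) andbF /= mulr0 mul0r.
  rewrite (sum_only q) => [|k Hk]; last first.
    by rewrite (negbTE Hk) andbF /= mulr0 mul0r.
  by rewrite !eqxx /= mulr1.
rewrite mxE mulr0; symmetry.
by rewrite big1 // => i _; rewrite big1 // => j _; rewrite big1 // => k _; rewrite mul0r.
Qed.

Lemma D1E (v1 : 'rV[R]_n) m :
  Dkf (@thm_f R n) 0 [:: v1] 0 m = \sum_i v1 0 i * C1f m i.
Proof.
rewrite /Dkf sum_tupleS summxE; apply: eq_bigr => i _.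
rewrite sum_tuple0 mxE big_ord1 /iter_partial_deriv /= thm_f_poly partial_polyf polyf0 mxE.
by rewrite tnth0.
Qed.

Lemma D2E (v2 v3 : 'rV[R]_n) m :
  Dkf (@thm_f R n) 0 [:: v2; v3] 0 m =
  \sum_i \sum_j v2 0 i * v3 0 j * (C2f m j i + C2f m i j).
Proof.
rewrite /Dkf sum_tupleS summxE; apply: eq_bigr => i _.
rewrite sum_tupleS summxE; apply: eq_bigr => j _.
rewrite sum_tuple0 mxE !big_ord_recl big_ord0 /iter_partial_deriv /= thm_f_poly !partial_polyf polyf0 mxE.
by rewrite !(tnthS, tnth0) ?mulr1 ?mulrA.
Qed.

Lemma D3E (v3 : 'rV[R]_n) m :
  Dkf (@thm_f R n) 0 [:: v3; v3; v3] 0 m =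
  \sum_i \sum_j \sum_k v3 0 i * v3 0 j * v3 0 k *
   ((C3f m k j i + C3f m j k i + C3f m j i k) + (C3f m k i j + C3f m i k j + C3f m i j k)).
Proof.
rewrite /Dkf sum_tupleS summxE; apply: eq_bigr => i _.
rewrite sum_tupleS summxE; apply: eq_bigr => j _.
rewrite sum_tupleS summxE; apply: eq_bigr => k _.
rewrite sum_tuple0 mxE !big_ord_recl big_ord0 /iter_partial_deriv /= thm_f_poly !partial_polyf polyf0 mxE.
by rewrite !(tnthS, tnth0) ?mulr1 ?mulrA.
Qed.

Definition conv (a b : 'rV[R]_n) (k : nat) : R :=
  \sum_i \sum_j a 0 i * b 0 j * (val i + val j == k)%N%:R.

Lemma splitL (i : 'I_n) : fintype.split (lshift (n + n) i) = inl i.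
Proof. exact: (unsplitK (inl i)). Qed.
Lemma splitR (p : 'I_(n + n)) : fintype.split (rshift n p) = inr p.
Proof. exact: (unsplitK (inr p)). Qed.
Lemma splitL' (i : 'I_n) : fintype.split (lshift n i) = inl i.
Proof. exact: (unsplitK (inl i)). Qed.
Lemma splitR' (p : 'I_n) : fintype.split (rshift n p) = inr p :> ('I_n + 'I_n).
Proof. exact: (unsplitK (inr p)). Qed.

Lemma D1lE (v1 : 'rV[R]_n) i' : \sum_i v1 0 i * C1f (lshift (n + n) i') i = v1 0 i'.
Proof. by rewrite /C1f splitL sumd. Qed.

Lemma D1rE (v1 : 'rV[R]_n) p : \sum_i v1 0 i * C1f (rshift n p) i = 0.
Proof. by rewrite /C1f splitR big1 // => i _; rewrite mulr0. Qed.

Lemma D2lE (v2 v3 : 'rV[R]_n) i' :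
  \sum_i \sum_j v2 0 i * v3 0 j * (C2f (lshift (n + n) i') j i + C2f (lshift (n + n) i') i j) = 0.
Proof. by rewrite /C2f splitL big1 // => i _; rewrite big1 // => j _; rewrite addr0 mulr0. Qed.

Lemma D2rE (v2 v3 : 'rV[R]_n) p :
  \sum_i \sum_j v2 0 i * v3 0 j * (C2f (rshift n p) j i + C2f (rshift n p) i j) =
  if val p == 0%N then 0 else conv v2 v3 (val p).-1.
Proof.
rewrite /C2f splitR; case: eqP => hp.
  by rewrite big1 // => i _; rewrite big1 // => j _; rewrite addr0 mulr0.
apply: eq_bigr => i _; apply: eq_bigr => j _; rewrite addnC; congr (_ * _).
have h2 : (2:R)^-1 + 2^-1 = 1 by field.
by rewrite -mulrDl h2 mul1r.
Qed.

Lemma D3lE (v3 : 'rV[R]_n) i' :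
  \sum_i \sum_j \sum_k v3 0 i * v3 0 j * v3 0 k *
   ((C3f (lshift (n + n) i') k j i + C3f (lshift (n + n) i') j k i + C3f (lshift (n + n) i') j i k)
  + (C3f (lshift (n + n) i') k i j + C3f (lshift (n + n) i') i k j + C3f (lshift (n + n) i') i j k)) = 0.
Proof.
rewrite /C3f splitL big1 // => i _; rewrite big1 // => j _; rewrite big1 // => k _.
by rewrite !addr0 mulr0.
Qed.

Lemma D3rrE (v3 : 'rV[R]_n) r :
  let m := rshift n (rshift n r) in
  \sum_i \sum_j \sum_k v3 0 i * v3 0 j * v3 0 k *
   ((C3f m k j i + C3f m j k i + C3f m j i k) + (C3f m k i j + C3f m i k j + C3f m i j k)) = 0.
Proof.
rewrite /= /C3f splitR splitR' big1 // => i _; rewrite big1 // => j _; rewrite big1 // => k _.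
by rewrite !addr0 mulr0.
Qed.

Lemma D3rlE (v3 : 'rV[R]_n) q :
  let m := rshift n (lshift n q) in
  \sum_i \sum_j \sum_k v3 0 i * v3 0 j * v3 0 k *
   ((C3f m k j i + C3f m j k i + C3f m j i k) + (C3f m k i j + C3f m i k j + C3f m i j k))
  = v3 0 q ^+ 3.
Proof.
rewrite /= /C3f splitR splitL'.
rewrite (sum_only q) => [|i Hi]; last first.
  rewrite big1 // => j _; rewrite big1 // => k _.
  by rewrite (negbTE Hi) ?andbF /= !mulr0 !addr0 mulr0.
rewrite (sum_only q) => [|j Hj]; last first.
  rewrite big1 // => k _.
  by rewrite (negbTE Hj) ?andbF /= !mulr0 !addr0 mulr0.
rewrite (sum_only q) => [|k Hk]; last first.
  by rewrite (negbTE Hk) ?andbF /= !mulr0 !addr0 mulr0.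
by rewrite !eqxx /= !mulr1; field.
Qed.

Lemma min_nz (v : 'rV[R]_n) : v != 0 ->
  exists2 j0 : 'I_n, v 0 j0 != 0 & forall j : 'I_n, (val j < val j0)%N -> v 0 j = 0.
Proof.
move=> Hv.
have : ~~ [forall j, v 0 j == 0].
  apply: contra Hv => /forallP Hf; apply/eqP/rowP => j; rewrite mxE; exact/eqP/Hf.
rewrite negb_forall => /existsP [j1 Hj1].
case: (@arg_minnP _ j1 (fun j : 'I_n => v 0 j != 0) (fun j : 'I_n => val j) Hj1) => j0 Hj0 Hmin.
exists j0 => // j Hj; apply/eqP; apply: contraTT Hj => Hj'; rewrite -leqNgt; exact: Hmin.
Qed.

Lemma final_arith (v2 v3 : 'rV[R]_n) lam :
  v3 != 0 ->
  (forall q : 'I_n, (if val q == 0%N then 0 else conv v2 v3 (val q).-1) + lam * v3 0 q ^+ 3 = 0) ->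
  (lam = 0 -> forall k, (k.+1 < n + n)%N -> conv v2 v3 k = 0) ->
  v2 = 0 /\ lam = 0.
Proof.
move=> Hv3 Hq Hk.
have [j0 Hj0 Hlow] := min_nz _ Hv3.
have lam0 : lam = 0.
  have := Hq j0.
  have -> : (if val j0 == 0%N then 0 else conv v2 v3 (val j0).-1) = 0.
    case: eqP => // hj; rewrite /conv big1 // => i _; rewrite big1 // => j _.
    case: eqP => hij; last by rewrite mulr0.
    rewrite Hlow ?mulr0 ?mul0r //; apply: (@leq_ltn_trans (\val i + \val j)); first exact: leq_addl.
    by rewrite hij; move: hj; case: (\val j0).
  rewrite add0r => /eqP; rewrite mulf_eq0 expf_eq0 (negbTE Hj0) andbF orbF.
  by move/eqP.
split => //.
apply/eqP; apply/negPn/negP => Hv2.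
have [i0 Hi0 Hlow2] := min_nz _ Hv2.
have hk : ((val i0 + val j0).+1 < n + n)%N.
  have h1 : (val i0 < n)%N := ltn_ord i0. have h2 : (val j0 < n)%N := ltn_ord j0. lia.
have := Hk lam0 _ hk.
rewrite /conv (sum_only i0) => [|i Hi]; last first.
  rewrite big1 // => j _; case: eqP => hij; last by rewrite mulr0.
  have hne : val i != val i0 by [].
  have [lt|lt] : (val i < val i0)%N \/ (val j < val j0)%N by move: hij hne; simpl; lia.
    by rewrite (Hlow2 _ lt) !mul0r.
  by rewrite (Hlow _ lt) mulr0 mul0r.
rewrite (sum_only j0) => [|j Hj]; last first.
  case: eqP => hij; last by rewrite mulr0.
  have hne : val j != val j0 by [].
  exfalso; move/eqP: hne; apply; move: hij; simpl; lia.
rewrite eqxx mulr1 => /eqP; rewrite mulf_eq0 (negbTE Hi0) (negbTE Hj0) //.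
Qed.

End Main.

Theorem theorem3p1 (R : realType) (n : nat) (hn : (0 < n)%N)
  (v1 v2 v3 : 'rV[R]_n) (lam : R) :
  Dkf (@thm_f R n) 0 [:: v1] + Dkf (@thm_f R n) 0 [:: v2; v3]
    + lam *: Dkf (@thm_f R n) 0 [:: v3; v3; v3] = 0 ->
  v3 != 0 ->
  v1 = 0 /\ v2 = 0 /\ lam = 0.
Proof.
move=> H Hv3.
have Hm := fun m => congr1 (fun M : 'rV[R]_(n + (n + n)) => M 0 m) H.
split.
  apply/rowP => i; have := Hm (lshift (n + n) i).
  rewrite /= !mxE D1E D2E D3E D1lE D2lE D3lE mulr0 !addr0 => ->.
  by [].
apply: (@final_arith R n v2 v3 lam Hv3).
  move=> q; have := Hm (rshift n (lshift n q)).
  by rewrite /= !mxE D1E D2E D3E D1rE D2rE D3rlE add0r.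
move=> l0 k hk; have := Hm (rshift n (Ordinal hk)).
by rewrite /= !mxE D1E D2E D3E D1rE D2rE l0 mul0r addr0 add0r.
Qed.
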